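(* Let $n_\Gamma \le n$ be positive integers, let $H$ be a real symmetric $n\times n$ matrix, and let $R$ be a real $n_\Gamma\times n$ matrix with $RR^T = I_{n_\Gamma}$ (so that $R^TR$ is an orthogonal projection on $\mathbb{R}^n$). For $s_0>0$ define $$\widetilde{Y}(s_0) = R\,(s_0 I_n + iH)^{-1}R^T .$$ Then $\widetilde{Y}(s_0)$ is invertible, and the $n_\Gamma\times n_\Gamma$ matrix $$\bar{H}_{\Gamma,\Gamma} = (-i)\big(\widetilde{Y}(s_0)^{-1} - s_0 I_{n_\Gamma}\big)$$ is (complex) symmetric and its imaginary part $\operatorname{Im}\bar{H}_{\Gamma,\Gamma}$ (taken entrywise) is negative semidefinite; equivalently $\operatorname{Im}\bar{H}_{\Gamma,\Gamma} = -\operatorname{Re}\big(\widetilde{Y}(s_0)^{-1}-s_0 I_{n_\Gamma}\big)\le 0$.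
   Context: Here $H$ plays the role of the (discretized) Hamiltonian $H_{\mathrm{II},\mathrm{II}}$ restricted to an exterior region, $R$ is the restriction operator from the exterior region to a boundary layer $\Gamma$, and $\widetilde{Y}(s)$ is the Laplace transform of $Y(t)=Re^{-iHt}R^T$. The matrix $\bar H_{\Gamma,\Gamma}$ is the effective boundary Hamiltonian of the absorbing boundary condition $i\partial_t\delta\rho_{\Gamma,\Gamma} = [\bar H_{\Gamma,\Gamma},\delta\rho_{\Gamma,\Gamma}] + (\text{source terms})$, chosen so that $Z(t)=e^{-i\bar H_{\Gamma,\Gamma}t}$ satisfies $\widetilde Z(s_0)=\widetilde Y(s_0)$. For a complex matrix $M$, $\operatorname{Re}M$ and $\operatorname{Im}M$ denote the entrywise real and imaginary parts; ''$\le 0$'' means negative semidefinite. *)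

(* Defs.v *)
From HB Require Import structures.
From mathcomp Require Import all_boot all_order all_algebra.
From mathcomp Require Export complex.
Set Implicit Arguments. Unset Strict Implicit. Unset Printing Implicit Defensive.
Import Order.TTheory GRing.Theory Num.Theory.
Local Open Scope ring_scope.

Definition cmx (R : rcfType) (m n : nat) (A : 'M[R]_(m, n)) : 'M[R[i]]_(m, n) :=
  map_mx (fun x => x%:C%C) A.

Definition cReMx (R : rcfType) (m n : nat) (A : 'M[R[i]]_(m, n)) : 'M[R]_(m, n) :=
  map_mx (@complex.Re R) A.
Definition cImMx (R : rcfType) (m n : nat) (A : 'M[R[i]]_(m, n)) : 'M[R]_(m, n) :=
  map_mx (@complex.Im R) A.

Definition negsemidef (R : rcfType) (n : nat) (A : 'M[R]_n) : Prop :=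
  forall v : 'cV[R]_n, (v^T *m A *m v) 0 0 <= 0.

Definition Ytilde (R : rcfType) (m n : nat) (H : 'M[R]_n) (Rm : 'M[R]_(m, n)) (s0 : R)
  : 'M[R[i]]_m :=
  cmx Rm *m invmx ((s0%:C)%C%:M + ('i)%C *: cmx H) *m (cmx Rm)^T.

Definition Hbar (R : rcfType) (m n : nat) (H : 'M[R]_n) (Rm : 'M[R]_(m, n)) (s0 : R)
  : 'M[R[i]]_m :=
  (- ('i)%C) *: (invmx (Ytilde H Rm s0) - (s0%:C)%C%:M).

(* Main.v *)
Require Import Defs.
From mathcomp Require Import all_boot all_order all_algebra.
From mathcomp Require Import complex.
From mathcomp Require Import ring lra.
Import Order.TTheory GRing.Theory Num.Theory.
Local Open Scope ring_scope.

Section Aux.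
Context {R : rcfType}.
Local Notation C := R[i].
Local Notation Re := (@complex.Re R).
Local Notation Im := (@complex.Im R).

Lemma ReD (x y : C) : Re (x + y) = Re x + Re y. Proof. by case: x; case: y. Qed.
Lemma ImD (x y : C) : Im (x + y) = Im x + Im y. Proof. by case: x; case: y. Qed.
Lemma Re_sum (I : Type) (r : seq I) (P : pred I) (F : I -> C) :
  Re (\sum_(i <- r | P i) F i) = \sum_(i <- r | P i) Re (F i).
Proof. exact: (big_morph _ ReD (erefl _)). Qed.
Lemma Im_sum (I : Type) (r : seq I) (P : pred I) (F : I -> C) :
  Im (\sum_(i <- r | P i) F i) = \sum_(i <- r | P i) Im (F i).
Proof. exact: (big_morph _ ImD (erefl _)). Qed.

Lemma Re_conjM (x : C) : Re (conjc x * x) = Re x ^+ 2 + Im x ^+ 2.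
Proof. case: x => a b /=. ring. Qed.
Lemma Im_conjHM (x y : C) (h : R) : Im (conjc x * (h%:C)%C * y) = h * (Re x * Im y - Im x * Re y).
Proof. case: x => a b; case: y => c d /=. ring. Qed.
Lemma Re_scal (s : R) (x : C) : Re ((s%:C)%C * x) = s * Re x.
Proof. case: x => a b /=. ring. Qed.
Lemma Re_iM (x : C) : Re ('i%C * x) = - Im x.
Proof. case: x => a b /=. ring. Qed.
Lemma Im_miM (x : C) : Im (- 'i%C * x) = - Re x.
Proof. case: x => a b /=. ring. Qed.
Lemma conjc_realx (s : R) : conjc ((s%:C)%C) = (s%:C)%C.
Proof. by rewrite /= oppr0. Qed.

Definition conjm {m n} (M : 'M[C]_(m, n)) : 'M[C]_(m, n) := map_mx (@conjc R) M.
Definition cf {n} (p : 'cV[C]_n) (M : 'M[C]_n) : C := (((conjm p)^T *m M) *m p) 0 0.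
Definition Nrm {n} (p : 'cV[C]_n) : R := \sum_j (Re (p j 0) ^+ 2 + Im (p j 0) ^+ 2).

Lemma cf_expand n (p : 'cV[C]_n) M :
  cf p M = \sum_k (\sum_j conjc (p j 0) * M j k) * p k 0.
Proof.
rewrite /cf mxE; apply: eq_bigr => k _; rewrite mxE; congr (_ * _).
by apply: eq_bigr => j _; rewrite !mxE.
Qed.

Lemma cf1 n (p : 'cV[C]_n) : Re (cf p 1%:M) = Nrm p.
Proof.
rewrite /cf mulmx1 mxE Re_sum; apply: eq_bigr => j _.
by rewrite !mxE Re_conjM.
Qed.

Lemma cfH n (p : 'cV[C]_n) (H : 'M[R]_n) : H^T = H -> Im (cf p (cmx H)) = 0.
Proof.
move=> HT.
have Hs j k : H j k = H k j by rewrite -[in LHS]HT mxE.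
rewrite cf_expand Im_sum.
under eq_bigr => k _ do rewrite mulr_suml Im_sum.
under eq_bigr => k _ do under eq_bigr => j _ do rewrite /cmx mxE Im_conjHM.
set S := \sum_k _.
have : S = - S.
  rewrite {1}/S exchange_big /= /S -sumrN; apply: eq_bigr => k _.
  rewrite -sumrN; apply: eq_bigr => j _; rewrite Hs; ring.
lra.
Qed.

Lemma Nrm_ge0 n (p : 'cV[C]_n) : 0 <= Nrm p.
Proof. by apply: sumr_ge0 => j _; rewrite addr_ge0 // sqr_ge0. Qed.

Lemma Nrm0 n (p : 'cV[C]_n) : Nrm p = 0 -> p = 0.
Proof.
move=> /eqP; rewrite psumr_eq0 => [/allP h|j _]; last by rewrite addr_ge0 // sqr_ge0.
apply/matrixP => j k; rewrite ord1 mxE.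
have := h j (mem_index_enum j); rewrite paddr_eq0 ?sqr_ge0 // !sqrf_eq0.
by case: (p j 0) => a b /= /andP[/eqP -> /eqP ->].
Qed.

Lemma unit_crit n (M : 'M[C]_n) : (forall p : 'cV[C]_n, M *m p = 0 -> p = 0) -> M \in unitmx.
Proof.
move=> h; rewrite -unitmx_tr -row_free_unit; apply: inj_row_free => v hv.
have : v^T = 0 by apply: h; rewrite -(trmxK M) -trmx_mul hv trmx0.
by move/(congr1 trmx); rewrite trmxK trmx0.
Qed.

Lemma cfD n (p : 'cV[C]_n) A B : cf p (A + B) = cf p A + cf p B.
Proof. by rewrite /cf mulmxDr mulmxDl mxE. Qed.
Lemma cfZ n (p : 'cV[C]_n) c A : cf p (c *: A) = c * cf p A.
Proof. by rewrite /cf -scalemxAr -scalemxAl mxE. Qed.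
Lemma cfS n (p : 'cV[C]_n) c : cf p c%:M = c * cf p 1%:M.
Proof. by rewrite -cfZ scalemx1. Qed.

Lemma cfK n (p : 'cV[C]_n) (H : 'M[R]_n) s0 : H^T = H ->
  Re (cf p ((s0%:C)%C%:M + 'i%C *: cmx H)) = s0 * Nrm p.
Proof.
move=> HT; rewrite cfD cfZ cfS ReD Re_scal Re_iM cfH // cf1; lra.
Qed.

Lemma conjm_cmx m n (M : 'M[R]_(m, n)) : conjm (cmx M) = cmx M.
Proof. by apply/matrixP => i j; rewrite !mxE conjc_realx. Qed.

Lemma conjmM m n k (A : 'M[C]_(m, n)) (B : 'M[C]_(n, k)) : conjm (A *m B) = conjm A *m conjm B.
Proof. exact: map_mxM. Qed.

Lemma cmxM m n k (A : 'M[R]_(m, n)) (B : 'M[R]_(n, k)) : cmx (A *m B) = cmx A *m cmx B.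
Proof. exact: map_mxM. Qed.

Lemma cmxT m n (A : 'M[R]_(m, n)) : cmx A^T = (cmx A)^T.
Proof. by rewrite /cmx map_trmx. Qed.

Lemma cmx1 n : cmx (1%:M : 'M[R]_n) = 1%:M.
Proof. exact: map_mx1. Qed.

Lemma dot_ge0 n (w : 'cV[R]_n) : 0 <= (w^T *m w) 0 0.
Proof. by rewrite mxE; apply: sumr_ge0 => i _; rewrite mxE -expr2 sqr_ge0. Qed.

Lemma proj_le m n (Rm : 'M[R]_(m, n)) (a : 'cV[R]_n) : Rm *m Rm^T = 1%:M ->
  ((Rm *m a)^T *m (Rm *m a)) 0 0 <= (a^T *m a) 0 0.
Proof.
move=> hR.
set P := Rm^T *m Rm.
set Q := 1%:M - P.
have PT : P^T = P by rewrite /P trmx_mul trmxK.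
have PP : P *m P = P by rewrite /P mulmxA -(mulmxA Rm^T) hR mulmx1.
have QT : Q^T = Q by rewrite /Q linearB /= PT trmx1.
have QQ : Q^T *m Q = Q by rewrite QT /Q mulmxBl mul1mx mulmxBr mulmx1 PP subrr subr0.
have e : a^T *m a = (Rm *m a)^T *m (Rm *m a) + (Q *m a)^T *m (Q *m a).
  rewrite !trmx_mul -!mulmxA (mulmxA Q^T) QQ (mulmxA Rm^T) -/P -mulmxDr -mulmxDl.
  by rewrite /Q addrC subrK mul1mx.
by rewrite e [X in _ <= X]mxE lerDl dot_ge0.
Qed.

Lemma Re_Mr (x : C) (b : R) : Re (x * (b%:C)%C) = Re x * b.
Proof. case: x => a c /=. ring. Qed.

Lemma ReForm n (v : 'cV[R]_n) (M : 'M[C]_n) :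
  (v^T *m cReMx M *m v) 0 0 = Re (((cmx v)^T *m M *m cmx v) 0 0).
Proof.
rewrite !mxE Re_sum; apply: eq_bigr => k _.
rewrite /cmx [map_mx _ v k 0]mxE Re_Mr; congr (_ * _); rewrite !mxE Re_sum.
by apply: eq_bigr => j _; rewrite !mxE Re_scal.
Qed.

Lemma cReMx_cmxM m n (Rm : 'M[R]_(m, n)) (p : 'cV[C]_n) :
  cReMx (cmx Rm *m p) = Rm *m cReMx p.
Proof.
apply/matrixP => i j; rewrite !mxE Re_sum; apply: eq_bigr => k _.
by rewrite !mxE Re_scal.
Qed.

Lemma cReMx_cmx m n (v : 'M[R]_(m, n)) : cReMx (cmx v) = v.
Proof. by apply/matrixP => i j; rewrite !mxE. Qed.

Lemma cReMx_subs n (Z : 'M[C]_n) (s : R) : cReMx (Z - (s%:C)%C%:M) = cReMx Z - s%:M.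
Proof.
apply/matrixP => i j; rewrite !mxE; case: (i == j) => /=; case: (Z i j) => a b /=.
  by rewrite !mulr1n.
by rewrite !mulr0n /= oppr0 addr0.
Qed.

Lemma dot_le_Nrm n (p : 'cV[C]_n) : ((cReMx p)^T *m cReMx p) 0 0 <= Nrm p.
Proof.
rewrite mxE; apply: ler_sum => j _; rewrite !mxE -expr2 lerDl sqr_ge0 //.
Qed.
End Aux.

Theorem mainTheorem1 (R : rcfType) (nG n : nat) (H : 'M[R]_n) (Rm : 'M[R]_(nG, n))
  (s0 : R) :
  (0 < nG)%N -> (nG <= n)%N ->
  H^T = H -> Rm *m Rm^T = 1%:M -> 0 < s0 ->
  Ytilde H Rm s0 \in unitmx /\
  (Hbar H Rm s0)^T = Hbar H Rm s0 /\
  negsemidef (cImMx (Hbar H Rm s0)) /\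
  cImMx (Hbar H Rm s0) = - cReMx (invmx (Ytilde H Rm s0) - (s0%:C)%C%:M).
Proof.
move=> _ _ HT hR s0pos.
set A := (s0%:C)%C%:M + 'i%C *: cmx H.
set Rc := cmx Rm.
have AT : A^T = A by rewrite /A linearD /= linearZ /= tr_scalar_mx -cmxT HT.
have Au : A \in unitmx.
  apply: unit_crit => p hp; apply: Nrm0.
  have : complex.Re (cf p A) = 0 by rewrite /cf -mulmxA hp mulmx0 mxE.
  rewrite cfK // => /eqP; rewrite mulf_eq0 gt_eqF //= => /eqP //.
have RcRc : Rc *m Rc^T = 1%:M by rewrite -cmxT -cmxM hR cmx1.
have YE : Ytilde H Rm s0 = Rc *m invmx A *m Rc^T by [].
have Yu : Ytilde H Rm s0 \in unitmx.
  apply: unit_crit => x hx.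
  set pp := invmx A *m (Rc^T *m x).
  have h1 : Rc *m pp = 0 by rewrite /pp !mulmxA; exact: hx.
  have h2 : A *m pp = Rc^T *m x by rewrite /pp mulKVmx.
  have h3 : (conjm pp)^T *m Rc^T = 0.
    by rewrite -trmx_mul -[Rc](@conjm_cmx _ _ _ Rm) -conjmM h1 /conjm map_mx0 trmx0.
  have : complex.Re (cf pp A) = 0 by rewrite /cf -mulmxA h2 mulmxA h3 mul0mx mxE.
  rewrite cfK // => /eqP; rewrite mulf_eq0 gt_eqF //= => /eqP /Nrm0 hpp.
  by rewrite -[x]mul1mx -RcRc -mulmxA -h2 hpp !mulmx0.
have YT : (Ytilde H Rm s0)^T = Ytilde H Rm s0.
  by rewrite YE !trmx_mul trmxK trmx_inv AT mulmxA.
have HI : cImMx (Hbar H Rm s0) = - cReMx (invmx (Ytilde H Rm s0) - (s0%:C)%C%:M).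
  rewrite /Hbar; move: (invmx (Ytilde H Rm s0) - _) => M.
  by apply/matrixP => i j; rewrite !mxE Im_miM.
split; first exact: Yu.
split.
  by rewrite /Hbar linearZ /= linearB /= trmx_inv YT tr_scalar_mx.
split; last exact: HI.
move=> v; rewrite HI cReMx_subs.
set Z := invmx (Ytilde H Rm s0).
have key : s0 * (v^T *m v) 0 0 <= (v^T *m cReMx Z *m v) 0 0.
  rewrite ReForm.
  set cv := cmx v.
  set q := Z *m cv.
  set pp := invmx A *m (Rc^T *m q).
  have h1 : Rc *m pp = cv.
    have -> : Rc *m pp = Ytilde H Rm s0 *m q by rewrite /pp !mulmxA.
    by rewrite /q mulmxA mulmxV // mul1mx.
  have h2 : A *m pp = Rc^T *m q by rewrite /pp mulKVmx.
  have e : ((cv^T *m Z) *m cv) 0 0 = cf pp A.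
    rewrite /cf -mulmxA -/q -mulmxA h2 mulmxA -trmx_mul -[Rc](@conjm_cmx _ _ _ Rm) -conjmM h1.
    by rewrite /cv conjm_cmx.
  rewrite e cfK //; apply: ler_wpM2l; first exact: ltW.
  have hv : v = Rm *m cReMx pp by rewrite -cReMx_cmxM h1 /cv cReMx_cmx.
  rewrite hv; exact: le_trans (@proj_le _ _ _ Rm (cReMx pp) hR) (@dot_le_Nrm _ _ pp).
rewrite mulmxN mulNmx mulmxBr mulmxBl mul_mx_scalar -scalemxAl.
move: key; set X := v^T *m cReMx Z *m v; set Y := v^T *m v.
rewrite !mxE; lra.
Qed.
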